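(* Let $X$ be a correlator of type $X_{-1}$ and let $W_1=x_1^{a_1}x_2+\dots+x_{N-1}^{a_{N-1}}x_N+x_N^{a_N}x_1$ be a loop summand with $K_{W_1}=1$. Then, after cyclically renumbering the variables of $W_1$, the sequence $(K_1,\dots,K_N)$ is a concatenation of blocks $(0)$ and $(-1,1)$ followed by exactly one of the blocks $(1)$, $(-1,2)$, $(-2,3)$. The block $(-2,3)$ can occur only if $a_{N-1}=2$, and in the cases $(-1,2)$ and $(-2,3)$ one has $\ell_{N-1}+\ell_N\le1$.
   Context: $W=\bigoplus_jW_j$ is an invertible polynomial written as a disjoint sum of atomic summands, $E_W$ its exponent matrix, $K_{W_1}=\sum_{i\in W_1}K_i$, loop indices taken mod $N$. A genus-zero correlator (B-model of $W^T$, or A-model of $(W,G_W)$ via Krawitz's map) is of type $X_{-1}$ if it has at least four insertions, has the form $\langle x_N,\dots,x_N,\dots,x_1,\dots,x_1,\alpha,\beta\rangle$ with $x_i$ appearing $\ell_i\ge0$ times and $\alpha=\prod x_i^{m_i}$, $\beta=\prod x_i^{n_i}$ monomials of the standard basis of $\mathrm{Jac}(W^T)$ (for a loop summand: exponents $0\le m_i,n_i\le a_i-1$), and, with $b=E_W^{-1}(\ell+m+n+2\cdot\mathbf 1)$ and $K_i=\ell_i-b_i+1$, satisfies $K_i\in\mathbb Z$ and $\sum_iK_i=1$. *)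

(* Defs.v *)
From HB Require Import structures.
From mathcomp Require Import all_boot all_order all_algebra.
Set Implicit Arguments. Unset Strict Implicit. Unset Printing Implicit Defensive.
Import Order.TTheory GRing.Theory Num.Theory.
Local Open Scope ring_scope.

(* Exponent matrix of the loop  W_1 = x_1^{a_1} x_2 + ... + x_N^{a_N} x_1
   (0-indexed): row i is the monomial x_i^{a_i} x_{i+1 mod N};
   entry (i,i) = a_i, entry (i, i+1 mod N) = 1, others 0. *)
Definition loop_mx (N : nat) (a : 'I_N -> nat) : 'M[rat]_N :=
  \matrix_(i < N, j < N)
    (if i == j then (a i)%:R
     else if (val j == (val i).+1 %% N)%N then 1 else 0).

(* Exponent matrix E_W of W = W_1 (+) W', W_1 the loop (first N variables),
   W' the remaining summands with exponent matrix E2 (M variables). *)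
Definition expmx (N M : nat) (a : 'I_N -> nat) (E2 : 'M[nat]_M) : 'M[rat]_(N + M) :=
  block_mx (loop_mx a) 0 0 (map_mx (fun k : nat => k%:R) E2).

Definition bvec (N M : nat) (a : 'I_N -> nat) (E2 : 'M[nat]_M)
  (l m n : 'I_(N + M) -> nat) : 'cV[rat]_(N + M) :=
  invmx (expmx a E2) *m \col_i ((l i + m i + n i + 2)%N%:R).

Definition Kval (N M : nat) (a : 'I_N -> nat) (E2 : 'M[nat]_M)
  (l m n : 'I_(N + M) -> nat) (i : 'I_(N + M)) : rat :=
  (l i)%:R - bvec a E2 l m n i 0 + 1.

Inductive blocks01 : seq rat -> Prop :=
  | blocks_nil : blocks01 [::]
  | blocks_0 s : blocks01 s -> blocks01 (0 :: s)
  | blocks_m11 s : blocks01 s -> blocks01 (-1 :: 1 :: s).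

(* Main.v *)
Require Import Defs.
From HB Require Import structures.
From mathcomp Require Import all_boot all_order all_algebra.
From mathcomp Require Import zify ring lra.
Import Order.TTheory GRing.Theory Num.Theory.
Local Open Scope ring_scope.

Lemma ordS_neq {N} (hN : (2 <= N)%N) (i : 'I_N) : ordS i != i.
Proof.
apply/eqP => /(congr1 val) /=; have hi := ltn_ord i.
case: (ltnP i.+1 N) => h; first by rewrite modn_small //; lia.
have -> : i.+1 = N by lia.
by rewrite modnn; lia.
Qed.

Lemma loop_row N (a : 'I_N -> nat) (y : 'I_N -> rat) (hN : (2 <= N)%N) i :
  \sum_k loop_mx a i k * y k = (a i)%:R * y i + y (ordS i).
Proof.
rewrite (bigD1 i) //= (bigD1 (ordS i)) /=; last by rewrite ordS_neq.
rewrite big1 ?addr0.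
  rewrite !mxE eqxx; congr (_ + _).
  by rewrite eq_sym (negbTE (ordS_neq hN i)) eqxx mul1r.
move=> k /andP [hk1 hk2]; rewrite mxE (eq_sym i k) (negbTE hk1).
case: ifP => [/eqP hv|]; last by rewrite mul0r.
have hk : k = ordS i by apply: val_inj; rewrite hv.
by rewrite hk eqxx in hk2.
Qed.

Lemma loop_unit N (a : 'I_N -> nat) (hN : (2 <= N)%N) (ha : forall i, (2 <= a i)%N) :
  loop_mx a \in unitmx.
Proof.
rewrite unitmxE unitfE -det_tr; apply/negP => /det0P [v vn0 hv].
have key : forall j : 'I_N, v 0 (ordS j) = - ((a j)%:R * v 0 j).
  move=> j; have := congr1 (fun A : 'rV[rat]_N => A 0 j) hv; rewrite !mxE.
  under eq_bigr do rewrite mxE mulrC.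
  rewrite (@loop_row _ a (fun k => v 0 k) hN j) => h; apply/eqP; rewrite -subr_eq0 opprK addrC h //.
have hS : \sum_j `|v 0 j| = \sum_j `|v 0 (ordS j)|.
  by rewrite (reindex_inj (@ordS_inj N)).
have le : forall j, 2 * `|v 0 j| <= `|v 0 (ordS j)|.
  move=> j; rewrite key normrN normrM ler_wpM2r // ger0_norm // ler_nat; exact: ha.
have : \sum_j 2 * `|v 0 j| <= \sum_j `|v 0 j|.
  by rewrite hS; apply: ler_sum => j _; exact: le.
rewrite -mulr_sumr => h2.
have h0 : \sum_j `|v 0 j| = 0.
  apply/eqP; rewrite eq_le sumr_ge0 // andbT.
  have : 0 <= \sum_j `|v 0 j| by rewrite sumr_ge0.
  lra.
move/eqP: vn0; apply; apply/rowP => j; rewrite mxE.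
have /psumr_eq0P : \sum_(j < N) `|v 0 j| = 0 by [].
move=> /(_ (fun j _ => normr_ge0 _)) /(_ j isT) /eqP; rewrite normr_eq0 => /eqP.
by [].
Qed.

Lemma row_eq N M (a : 'I_N -> nat) (E2 : 'M[nat]_M) (l m n : 'I_(N + M) -> nat)
  (hN : (2 <= N)%N) (ha : forall i, (2 <= a i)%N)
  (hE2 : \det (map_mx (fun k : nat => k%:R : rat) E2) != 0) (i : 'I_N) :
  (a i)%:R * bvec a E2 l m n (lshift M i) 0 + bvec a E2 l m n (lshift M (ordS i)) 0
  = (l (lshift M i) + m (lshift M i) + n (lshift M i) + 2)%N%:R.
Proof.
have hu : expmx a E2 \in unitmx.
  rewrite unitmxE unitfE /expmx det_ublock mulf_neq0 //.
  by have := @loop_unit _ a hN ha; rewrite unitmxE unitfE.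
set bv := bvec a E2 l m n.
have hE : expmx a E2 *m bv = \col_i ((l i + m i + n i + 2)%N%:R) by
  rewrite /bv /bvec mulKVmx.
clearbody bv.
have := congr1 (fun A : 'cV[rat]_(N + M) => A (lshift M i) 0) hE; rewrite /= !mxE => <-.
rewrite big_split_ord /= [X in _ = _ + X]big1 ?addr0; last first.
  by move=> k _; rewrite /expmx block_mxEur mxE mul0r.
under eq_bigr do rewrite /expmx block_mxEul.
by rewrite (@loop_row _ a (fun k => bv (lshift M k) 0) hN i).
Qed.

Lemma pair_int (a L1 L2 s k1 k2 : int) :
  2 <= a -> 0 <= L1 -> 0 <= L2 -> 0 <= s -> s <= 2 * a - 2 ->
  a * (L1 + 1 - k1) + (L2 + 1 - k2) = L1 + s + 2 -> k1 < 0 ->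
  [/\ 1 <= k2, 0 <= k1 + k2, (k1 + k2 = 0 -> k1 = -1 /\ k2 = 1) &
   (k1 + k2 = 1 -> (k1 = -1 /\ k2 = 2 /\ L1 + L2 <= 1) \/
                   (k1 = -2 /\ k2 = 3 /\ a = 2 /\ L1 + L2 <= 1))].
Proof.
move=> ha hL1 hL2 hs0 hs he hk.
set b1 := L1 + 1 - k1.
set Q := (a - 1) * (b1 - 2).
have eQ : a * b1 = Q + 2 * a + b1 - 2 by rewrite /Q; ring.
rewrite eQ in he.
have hb1 : 2 <= b1 by rewrite /b1; lia.
have hQ1 : (a - 1) * (-k1 - 1) <= Q by rewrite /Q; nia.
have hQ2 : b1 - 2 <= Q by rewrite /Q; nia.
have hR : -k1 - 1 <= (a - 1) * (-k1 - 1) by nia.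
have hR2 : 2 <= -k1 -> a - 1 <= (a - 1) * (-k1 - 1) by nia.
have hR3 : 2 <= -k1 -> 3 <= a -> 2 <= (a - 1) * (-k1 - 1) by nia.
split; try lia.
Qed.

Definition trip := (int * nat * nat)%type.
Definition kk (x : trip) : int := x.1.1.
Definition aa (x : trip) : nat := x.1.2.
Definition ll (x : trip) : nat := x.2.
Definition special2 (x y : trip) : Prop :=
  (kk x = -1 /\ kk y = 2 /\ (ll x + ll y <= 1)%N) \/
  (kk x = -2 /\ kk y = 3 /\ aa x = 2%N /\ (ll x + ll y <= 1)%N).
Definition pairok (x y : trip) : Prop :=
  kk x < 0 -> [/\ 1 <= kk y, 0 <= kk x + kk y,
     (kk x + kk y = 0 -> kk x = -1 /\ kk y = 1) &
     (kk x + kk y = 1 -> special2 x y)].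
Definition kq (x : trip) : rat := (kk x)%:~R.
Definition bl (s : seq trip) := blocks01 (map kq s).
Definition special (G : seq trip) :=
  (exists x, G = [:: x] /\ kk x = 1) \/ (exists x y, G = [:: x; y] /\ special2 x y).
Fixpoint lgood (s : seq trip) : Prop :=
  match s with
  | [::] => True
  | x :: t => (kk x < 0 -> match t with [::] => False | y :: _ => pairok x y end) /\ lgood t
  end.
Definition sk (s : seq trip) : int := \sum_(x <- s) kk x.

Lemma kq_m1 x : kk x = -1 -> kq x = -1.
Proof. by rewrite /kq => ->; rewrite intrN. Qed.
Lemma kq_1 x : kk x = 1 -> kq x = 1.
Proof. by rewrite /kq => ->. Qed.
Lemma kq_0 x : kk x = 0 -> kq x = 0.
Proof. by rewrite /kq => ->. Qed.

Lemma blocks_cat (p q : seq rat) : blocks01 p -> blocks01 q -> blocks01 (p ++ q).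
Proof.
move=> hp hq; elim: hp => [|s _ IH|s _ IH] //=.
  exact: blocks_0.
exact: blocks_m11.
Qed.

Lemma bl_cat p q : bl p -> bl q -> bl (p ++ q).
Proof. rewrite /bl map_cat; exact: blocks_cat. Qed.

Lemma lin_n n : forall s, (size s <= n)%N -> lgood s ->
  0 <= sk s /\ (sk s = 0 -> bl s) /\
  (sk s = 1 -> exists p1 G p2, s = p1 ++ G ++ p2 /\ bl p1 /\ special G /\ bl p2).
Proof.
elim: n => [|n IH] [|x t] //=.
- by move=> _ _; rewrite /sk big_nil; split => //; split => // _; exact: blocks_nil.
- by move=> _ _; rewrite /sk big_nil; split => //; split => // _; exact: blocks_nil.
move=> hs [hx ht].
case: (ltP (kk x) 0) => hneg.
  case: t hs hx ht => [|y u] hs hx ht; first by case: (hx hneg).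
  have [h1 h2 h3 h4] := hx hneg hneg.
  have [_ hu] := ht.
  have [IH1 [IH2 IH3]] := IH u ltac:(simpl in hs; lia) hu.
  have e : sk [:: x, y & u] = kk x + kk y + sk u by rewrite /sk !big_cons addrA.
  rewrite e; split; first lia.
  split.
    move=> hsum; have [hx1 hy1] : kk x = -1 /\ kk y = 1 by apply: h3; lia.
    rewrite /bl /= kq_m1 // kq_1 //; apply: blocks_m11; apply: IH2; lia.
  move=> hsum.
  case: (eqVneq (kk x + kk y) 0) => hxy.
    have [hx1 hy1] := h3 hxy.
    have [p1 [G [p2 [-> [hp1 [hG hp2]]]]]] := IH3 ltac:(lia).
    exists [:: x, y & p1], G, p2; split => //; split => //.
    rewrite /bl /= kq_m1 // kq_1 //; exact: blocks_m11.
  exists [::], [:: x; y], u; split => //; split; first exact: blocks_nil.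
  split; first by right; exists x, y; split => //; apply: h4; lia.
  apply: IH2; lia.
have [IH1 [IH2 IH3]] := IH t ltac:(simpl in hs; lia) ht.
have e : sk (x :: t) = kk x + sk t by rewrite /sk big_cons.
rewrite e; split; first lia.
split.
  move=> hsum; rewrite /bl /= kq_0; last lia.
  apply: blocks_0; apply: IH2; lia.
move=> hsum.
case: (eqVneq (kk x) 0) => hx0.
  have [p1 [G [p2 [-> [hp1 [hG hp2]]]]]] := IH3 ltac:(lia).
  exists (x :: p1), G, p2; split => //; split => //.
  rewrite /bl /= kq_0 //; exact: blocks_0.
exists [::], [:: x], t; split => //; split; first exact: blocks_nil.
split; first by left; exists x; split => //; lia.
apply: IH2; lia.
Qed.

Definition x0 : trip := (0, 0%N, 0%N).

Lemma rot_nth (T : seq trip) r p : (r <= size T)%N -> (p < size T)%N ->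
  nth x0 (rot r T) p = nth x0 T ((p + r) %% size T).
Proof.
move=> hr hp; rewrite /rot nth_cat size_drop.
case: (ltnP p (size T - r)) => h.
  have h' : (p + r < size T)%N by rewrite addnC -ltn_subRL.
  by rewrite nth_drop modn_small // addnC.
have h3 : (p - (size T - r) < r)%N by rewrite ltn_subLR // subnK.
rewrite nth_take //.
have -> : (p + r = size T + (p - (size T - r)))%N.
  by lia.
by rewrite modnDl modn_small //; apply: leq_trans h3 hr.
Qed.

Lemma has_nonneg s : 0 < sk s -> has (fun x => 0 <= kk x) s.
Proof.
elim: s => [|x t IH]; first by rewrite /sk big_nil.
rewrite /sk big_cons /= => h.
case: (leP 0 (kk x)) => hx /=; first by [].
apply: IH; move: h; rewrite /sk; set S := \sum_(_ <- _) _; lia.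
Qed.

Lemma lgood_nth s :
  (forall p, (p.+1 < size s)%N -> pairok (nth x0 s p) (nth x0 s p.+1)) ->
  (forall p, (p < size s)%N -> kk (nth x0 s p) < 0 -> (p.+1 < size s)%N) -> lgood s.
Proof.
elim: s => [|x t IH] //= h1 h2; split.
  move=> hx; case: t IH h1 h2 => [|y u] IH h1 h2.
    by have := h2 0%N isT hx.
  exact: (h1 0%N isT).
apply: IH => p hp.
  exact: (h1 p.+1 hp).
move=> hn; exact: (h2 p.+1 hp hn).
Qed.

Lemma rot_rot_mod (T : seq trip) r1 r2 : (0 < size T)%N -> (r1 <= size T)%N -> (r2 <= size T)%N ->
  rot r2 (rot r1 T) = rot ((r2 + r1) %% size T) T.
Proof.
move=> h0 h1 h2; apply: (@eq_from_nth _ x0); first by rewrite !size_rot.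
move=> p; rewrite !size_rot => hp.
rewrite rot_nth ?size_rot //.
rewrite rot_nth ?size_rot //; last by rewrite ltn_pmod.
rewrite rot_nth //; last by apply: ltnW; rewrite ltn_pmod.
by rewrite modnDml modnDmr addnA.
Qed.

Lemma cyc T : (0 < size T)%N ->
  (forall p, (p < size T)%N -> pairok (nth x0 T p) (nth x0 T (p.+1 %% size T))) ->
  sk T = 1 -> exists r p G, rot r T = p ++ G /\ bl p /\ special G.
Proof.
move=> h0 hc hs.
have h01 : 0 < sk T by rewrite hs.
have /(has_nthP x0) [j hj hjk] := @has_nonneg T h01.
set T1 := rot j.+1 T.
have sT1 : size T1 = size T by rewrite size_rot.
have hg : lgood T1.
  apply: lgood_nth; rewrite sT1.
    move=> p hp; rewrite /T1 !rot_nth //; last exact: ltnW.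
    have e : (((p + j.+1) %% size T).+1 %% size T = (p.+1 + j.+1) %% size T)%N.
      by rewrite -[((p + j.+1) %% size T).+1]addn1 modnDml addn1 addSn.
    rewrite -e; apply: hc; by rewrite ltn_pmod.
  move=> p hp; rewrite /T1 rot_nth //.
  case: (ltnP p.+1 (size T)) => // hp2.
  have -> : (p + j.+1 = size T + j)%N by clear -hp hp2; lia.
  rewrite modnDl modn_small // => hn.
  by move: hjk => /=; rewrite leNgt hn.
have pr : perm_eq T1 T by rewrite /T1 perm_rot.
have hs1 : sk T1 = 1 by rewrite /sk (perm_big _ pr).
have [_ [_ H3]] := @lin_n (size T1) T1 (leqnn _) hg.
have [p1 [G [p2 [e [hp1 [hG hp2]]]]]] := H3 hs1.
have hsz' : size T1 = (size (p1 ++ G) + size p2)%N by rewrite e catA size_cat.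
have hsz : (size (p1 ++ G) <= size T)%N by rewrite -sT1 hsz' leq_addr.
exists ((size (p1 ++ G) + j.+1) %% size T)%N, (p2 ++ p1), G.
rewrite -rot_rot_mod //.
rewrite -/T1 e catA rot_size_cat -catA; split => //; split => //.
exact: bl_cat.
Qed.

Theorem lemma6p15
  (N M : nat) (a : 'I_N -> nat) (E2 : 'M[nat]_M)
  (l m n : 'I_(N + M) -> nat)
  (hN : (2 <= N)%N)
  (ha : forall i : 'I_N, (2 <= a i)%N)
  (hE2 : \det (map_mx (fun k : nat => k%:R : rat) E2) != 0)
  (hm : forall i : 'I_N, (m (lshift M i) <= (a i).-1)%N)
  (hn : forall i : 'I_N, (n (lshift M i) <= (a i).-1)%N)
  (h4 : (4 <= \sum_(i < N + M) l i + 2)%N)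
  (hKint : forall i : 'I_(N + M), Kval a E2 l m n i \is a Num.int)
  (hKsum : \sum_(i < N + M) Kval a E2 l m n i = 1)
  (hKW1 : \sum_(i < N) Kval a E2 l m n (lshift M i) = 1) :
  exists r : nat,
    let Ks := rot r [seq Kval a E2 l m n (lshift M i) | i <- enum 'I_N] in
    let As := rot r [seq a i | i <- enum 'I_N] in
    let Ls := rot r [seq l (lshift M i) | i <- enum 'I_N] in
    exists p : seq rat, blocks01 p /\
      (Ks = p ++ [:: 1]
       \/ (Ks = p ++ [:: -1; 2]
           /\ (nth 0 Ls (N - 2) + nth 0 Ls (N - 1) <= 1)%N)
       \/ (Ks = p ++ [:: -2; 3]
           /\ nth 0 As (N - 2) = 2%N
           /\ (nth 0 Ls (N - 2) + nth 0 Ls (N - 1) <= 1)%N)).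
Proof.
set f := fun i : 'I_N => (Num.floor (Kval a E2 l m n (lshift M i)), a i, l (lshift M i)) : trip.
have hk : forall i, (kk (f i))%:~R = Kval a E2 l m n (lshift M i).
  by move=> i; have := hKint (lshift M i); rewrite intrEfloor => /eqP.
have hb : forall i, bvec a E2 l m n (lshift M i) 0 = (l (lshift M i))%:R + 1 - (kk (f i))%:~R.
  by move=> i; rewrite hk /Kval; ring.
have hpair : forall i, pairok (f i) (f (ordS i)).
  move=> i.
  have he := @row_eq _ _ a E2 l m n hN ha hE2 i.
  rewrite !hb in he.
  have hz : (a i)%:Z * ((l (lshift M i))%:Z + 1 - kk (f i)) + ((l (lshift M (ordS i)))%:Z + 1 - kk (f (ordS i)))
     = (l (lshift M i))%:Z + (m (lshift M i) + n (lshift M i))%N%:Z + 2.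
    apply: (@intr_inj rat); rewrite !(intrD, intrM, intrB) -!pmulrn.
    rewrite -!natrD in he *.
    rewrite !intrN !addnA he; congr (_%:R); by rewrite -[in RHS]addnA.
  have := @pair_int (a i)%:Z (l (lshift M i))%:Z (l (lshift M (ordS i)))%:Z
     (m (lshift M i) + n (lshift M i))%N%:Z (kk (f i)) (kk (f (ordS i))).
  have hai := ha i; have hmi := hm i; have hni := hn i.
  move=> /(_ ltac:(lia) ltac:(lia) ltac:(lia) ltac:(lia) ltac:(lia) hz) H hneg.
  have [H1 H2 H3 H4] := H hneg.
  split => // hs; have [[A1 [A2 A3]]|[A1 [A2 [A3 A4]]]] := H4 hs.
    by left; rewrite /ll /=; split => //; split => //; lia.
  by right; rewrite /ll /aa /=; split => //; split => //; split; lia.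
set T := [seq f i | i <- enum 'I_N].
have sT : size T = N by rewrite size_map size_enum_ord.
have nthT : forall p (hp : (p < N)%N), nth x0 T p = f (Ordinal hp).
  move=> p hp; rewrite (nth_map (Ordinal hp)) ?size_enum_ord //.
  by rewrite (nth_ord_enum (Ordinal hp) (Ordinal hp)).
have h0 : (0 < size T)%N by rewrite sT; apply: leq_trans hN.
have hc : forall p, (p < size T)%N -> pairok (nth x0 T p) (nth x0 T (p.+1 %% size T)).
  move=> p; rewrite sT => hp.
  have hq : (p.+1 %% N < N)%N by rewrite ltn_pmod //; apply: leq_trans hN.
  rewrite (nthT _ hp) (nthT _ hq).
  have -> : Ordinal hq = ordS (Ordinal hp) by apply: val_inj.
  exact: hpair.
have hs : sk T = 1.
  apply: (@intr_inj rat); rewrite /sk big_map rmorph_sum /=.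
  rewrite big_enum /=; under eq_bigr do rewrite hk.
  by rewrite hKW1.
have [r [p [G [er [hp hG]]]]] := @cyc T h0 hc hs.
exists r.
have eK : [seq Kval a E2 l m n (lshift M i) | i <- enum 'I_N] = map kq T.
  by rewrite /T -map_comp; apply: eq_map => i /=; rewrite /kq hk.
have eA : [seq a i | i <- enum 'I_N] = map aa T by rewrite /T -map_comp.
have eL : [seq l (lshift M i) | i <- enum 'I_N] = map ll T by rewrite /T -map_comp.
cbv zeta.
clearbody T. rewrite eK eA eL -!map_rot er.
exists (map kq p); split; first exact: hp.
have hsz : (size p + size G)%N = N by rewrite -size_cat -er size_rot.
case: hG => [[x [eG hx]]|[x [y [eG hxy]]]]; subst G.
  by left; rewrite map_cat /= kq_1.
have hsz2 : (size p + 2)%N = N by [].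
have hsp : size p = (N - 2)%N by clear -hsz2; lia.
have n2 : forall (U : Type) (u0 : U) (g : trip -> U), nth u0 (map g (p ++ [:: x; y])) (N - 2) = g x.
  move=> U u0 g; rewrite map_cat nth_cat size_map hsp ltnn subnn; done.
have n1 : forall (U : Type) (u0 : U) (g : trip -> U), nth u0 (map g (p ++ [:: x; y])) (N - 1) = g y.
  move=> U u0 g; rewrite map_cat nth_cat size_map hsp.
  have -> : (N - 1 < N - 2)%N = false by apply/negbTE; rewrite -leqNgt; lia.
  by have -> : (N - 1 - (N - 2))%N = 1%N by lia.
rewrite !n2 !n1.
case: hxy => [[hx [hy hl]]|[hx [hy [ha2 hl]]]].
  right; left; split => //.
  by rewrite map_cat /= kq_m1 // /kq hy.
right; right; split; last by split.
rewrite map_cat /= /kq hx hy intrN; done.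
Qed.
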